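(* Let $k\ge2$, $n\ge k$, $N=\binom nk$ and $1\le M\le N-1$. Let $H$ be the graph whose vertices are the labeled $k$-uniform hypergraphs on $[n]$ with exactly $M$ hyperedges, two hypergraphs $\mathcal H_1,\mathcal H_2$ being adjacent iff there are distinct $k$-sets $h_1\in E(\mathcal H_1)\setminus E(\mathcal H_2)$, $h_2\in E(\mathcal H_2)\setminus E(\mathcal H_1)$ with $\mathcal H_1-h_1=\mathcal H_2-h_2$. Let $m_{\mathcal H}(\mathcal H')=\frac{1}{M(N-M)+1}$ if $\mathcal H'=\mathcal H$ or $\mathcal H'$ is adjacent to $\mathcal H$, and $0$ otherwise. Then for all distinct $\mathcal H_1,\mathcal H_2\in V(H)$, \[\kappa(\mathcal H_1,\mathcal H_2)\ge\frac{N}{M(N-M)+1}.\]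
   Context: $\mathcal H-h$ denotes the hypergraph obtained by deleting hyperedge $h$. For a graph $H$ with random walk $m$ (each $m_x$ a probability distribution supported on $x$ and its neighbors), $d$ the graph distance on $H$, the transportation distance is $W(m_1,m_2)=\inf_A\sum_{x,y}A(x,y)d(x,y)$ over couplings $A$ of $m_1,m_2$, and the Ollivier Ricci curvature is $\kappa(x,y)=1-W(m_x,m_y)/d(x,y)$. *)

(* Defs.v *)
From Stdlib Require Import Reals ClassicalEpsilon.
From mathcomp Require Import all_boot.
Set Implicit Arguments. Unset Strict Implicit. Unset Printing Implicit Defensive.

Definition is_hyp (n k M : nat) (E : {set {set 'I_n}}) : bool :=
  [forall h in E, #|h| == k] && (#|E| == M).

Notation hgraph n k M := {E : {set {set 'I_n}} | @is_hyp n k M E}.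

Definition hadj (n : nat) (E1 E2 : {set {set 'I_n}}) : bool :=
  [exists h1 : {set 'I_n}, exists h2 : {set 'I_n},
     [&& h1 != h2, h1 \in E1 :\: E2, h2 \in E2 :\: E1 & E1 :\ h1 == E2 :\ h2]].

Definition Hadj (n k M : nat) : rel (hgraph n k M) :=
  fun x y => hadj (val x) (val y).

Definition reach_in (n k M : nat) (i : nat) (x y : hgraph n k M) : bool :=
  [exists p : i.-tuple (hgraph n k M), path (@Hadj n k M) x p && (last x p == y)].

(* Graph distance: least i with a walk of length i (H is connected, so a
   shortest path has fewer than #|V(H)| steps). *)
Definition hdist (n k M : nat) (x y : hgraph n k M) : nat :=
  find (fun i => reach_in i x y) (iota 0 #|{: hgraph n k M}|).

Open Scope R_scope.

Definition hwalk (n k M : nat) (x y : hgraph n k M) : R :=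
  if (y == x) || Hadj x y
  then / INR (M * ('C(n, k) - M) + 1)%N
  else 0.

Definition Rsum (T : finType) (f : T -> R) : R := \big[Rplus/0]_(t : T) f t.

Definition is_coupling (T : finType) (m1 m2 : T -> R) (A : T -> T -> R) : Prop :=
  (forall x y, 0 <= A x y) /\
  (forall x, Rsum (fun y => A x y) = m1 x) /\
  (forall y, Rsum (fun x => A x y) = m2 y).

Definition is_lb (S : R -> Prop) (w : R) : Prop := forall x, S x -> w <= x.
Definition is_glb (S : R -> Prop) (w : R) : Prop :=
  is_lb S w /\ forall w', is_lb S w' -> w' <= w.

Definition Rinf (S : R -> Prop) : R := epsilon (inhabits 0) (fun w => is_glb S w).

Definition transport (n k M : nat) (m1 m2 : hgraph n k M -> R) : R :=
  Rinf (fun c => exists A, is_coupling m1 m2 A /\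
          c = Rsum (fun x => Rsum (fun y => A x y * INR (hdist x y)))).

Definition kappa (n k M : nat) (x y : hgraph n k M) : R :=
  1 - transport (hwalk x) (hwalk y) / INR (hdist x y).

(* Main.v *)
Require Import Defs.
From Stdlib Require Import Reals Lra Lia ClassicalEpsilon.
From mathcomp Require Import all_boot.
From HB Require Import structures.
From mathcomp Require Import fingroup perm zify.
Set Implicit Arguments. Unset Strict Implicit. Unset Printing Implicit Defensive.
Open Scope R_scope.

Lemma Rplus_assoc' : associative Rplus.
Proof. by move=> x y z; rewrite Rplus_assoc. Qed.
HB.instance Definition _ := Monoid.isComLaw.Build R R0 Rplus Rplus_assoc' Rplus_comm Rplus_0_l.

Lemma hdist_le (n k M : nat) i (x y : hgraph n k M) :
  reach_in i x y -> (hdist x y <= i)%N.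
Proof.
move=> H; rewrite /hdist.
case: (ltnP i #|{: hgraph n k M}|) => Hi.
  rewrite leqNgt; apply/negP => /(before_find 0%N).
  by rewrite nth_iota // add0n H.
by apply: leq_trans Hi; rewrite -[X in (_ <= X)%N](size_iota 0) find_size.
Qed.

Lemma hdist_reach (n k M : nat) (x y : hgraph n k M) :
  (hdist x y < #|{: hgraph n k M}|)%N -> reach_in (hdist x y) x y.
Proof.
rewrite /hdist => H.
have Hs : has (fun i => reach_in i x y) (iota 0 #|{: hgraph n k M}|).
  by rewrite has_find size_iota.
have := nth_find 0%N Hs.
by rewrite nth_iota // add0n.
Qed.

Lemma hdist_max (n k M : nat) (x y : hgraph n k M) :
  (hdist x y <= #|{: hgraph n k M}|)%N.
Proof. by rewrite /hdist -[X in (_ <= X)%N](size_iota 0) find_size. Qed.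

Lemma reach_cat (n k M : nat) a b (x y z : hgraph n k M) :
  reach_in a x y -> reach_in b y z -> reach_in (a + b) x z.
Proof.
move=> /existsP [p /andP [Hp /eqP Hl]] /existsP [q /andP [Hq /eqP Hl2]].
apply/existsP; exists (cat_tuple p q).
by rewrite /= cat_path last_cat Hl Hp Hq Hl2 eqxx.
Qed.

Lemma hdist_tri (n k M : nat) (x y z : hgraph n k M) :
  (hdist x z <= hdist x y + hdist y z)%N.
Proof.
case: (ltnP (hdist x y) #|{: hgraph n k M}|) => H1; last first.
  by apply: leq_trans (hdist_max x z) _; apply: leq_trans H1 (leq_addr _ _).
case: (ltnP (hdist y z) #|{: hgraph n k M}|) => H2; last first.
  by apply: leq_trans (hdist_max x z) _; apply: leq_trans H2 (leq_addl _ _).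
apply: hdist_le; apply: reach_cat (hdist_reach H1) (hdist_reach H2).
Qed.

Lemma reach0 (n k M : nat) (x : hgraph n k M) : reach_in 0 x x.
Proof. by apply/existsP; exists [tuple]; rewrite /= eqxx. Qed.

Lemma hdist0 (n k M : nat) (x : hgraph n k M) : hdist x x = 0%N.
Proof. by apply/eqP; rewrite -leqn0; apply: hdist_le; apply: reach0. Qed.

Lemma reach1 (n k M : nat) (x y : hgraph n k M) : Hadj x y -> reach_in 1 x y.
Proof. by move=> H; apply/existsP; exists [tuple y]; rewrite /= H eqxx. Qed.

Lemma hdist_pos (n k M : nat) (x y : hgraph n k M) : x <> y -> (0 < hdist x y)%N.
Proof.
move=> Hxy; rewrite lt0n; apply/negP => /eqP H0.
have Hc : (0 < #|{: hgraph n k M}|)%N by apply/card_gt0P; exists x.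
have := hdist_reach (x:=x) (y:=y); rewrite H0 => /(_ Hc) /existsP [p /andP [_]].
by rewrite tuple0 /= => /eqP.
Qed.

Lemma hyp_card (n k M : nat) (x : hgraph n k M) : #|val x| = M.
Proof. by case: x => E /= /andP [_ /eqP]. Qed.

Lemma hyp_mem (n k M : nat) (x : hgraph n k M) h : h \in val x -> #|h| = k.
Proof. by case: x => E /= /andP [/forall_inP H _] /H /eqP. Qed.

Lemma cardD_sym (T : finType) (A B : {set T}) : #|A| = #|B| -> #|A :\: B| = #|B :\: A|.
Proof. by move=> H; rewrite !cardsD H setIC. Qed.

Lemma connect_walk (n k M : nat) j (x y : hgraph n k M) :
  #|val x :\: val y| = j -> exists p, path (@Hadj n k M) x p && (last x p == y).
Proof.
elim: j x => [|j IH] x Hj.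
  exists [::] => /=; apply/eqP/val_inj.
  apply/eqP; rewrite eqEcard (hyp_card x) (hyp_card y) leqnn andbT.
  by rewrite -setD_eq0 -cards_eq0 Hj.
have /card_gt0P [h1 Hh1] : (0 < #|val x :\: val y|)%N by rewrite Hj.
have /card_gt0P [h2 Hh2] : (0 < #|val y :\: val x|)%N.
  by rewrite -cardD_sym ?Hj // !hyp_card.
move: Hh1 Hh2; rewrite !inE => /andP [h1y h1x] /andP [h2x h2y].
have h12 : h1 != h2 by apply/eqP => E; rewrite E h2y in h1y.
pose E' := h2 |: (val x :\ h1).
have HE' : is_hyp k M E'.
  apply/andP; split.
    apply/forall_inP => h; rewrite !inE => /orP [/eqP -> | /andP [_ Hh]].
      by rewrite (hyp_mem h2y).
    by rewrite (hyp_mem Hh).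
  rewrite cardsU1 !inE (negbTE h2x) andbF /=.
  by have := hyp_card x; rewrite (cardsD1 h1) h1x => ->.
pose x' := (exist _ E' HE' : hgraph n k M).
have Hadj' : Hadj x x'.
  apply/existsP; exists h1; apply/existsP; exists h2.
  rewrite h12 /= !inE eqxx h1x (negbTE h12) h2x /=.
  rewrite eqxx /=.
  apply/eqP/setP => h; rewrite !inE.
  case: (eqVneq h h2) => [->|//]; by rewrite (negbTE h2x) andbF.
have Hc : #|val x' :\: val y| = j.
  have -> : val x' :\: val y = (val x :\: val y) :\ h1.
    apply/setP => h; rewrite !inE.
    case: (eqVneq h h2) => [->|]; first by rewrite h2y !andbF.
    by move=> _ /=; case: (h != h1); case: (h \in val y).
  by move: Hj; rewrite (cardsD1 h1 (val x :\: val y)) !inE h1x h1y /= add1n => -[].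
have [p /andP [Hp Hl]] := IH x' Hc.
by exists (x' :: p); rewrite /= Hadj' Hp.
Qed.

Lemma hdist_lt (n k M : nat) (x y : hgraph n k M) :
  (hdist x y < #|{: hgraph n k M}|)%N.
Proof.
have [p /andP [Hp /eqP Hl]] := connect_walk (erefl #|val x :\: val y|).
move: Hl; case: (shortenP Hp) => p' Hp' Hu _ Hl.
have Hr : reach_in (size p') x y.
  apply/existsP; exists (in_tuple p'); by rewrite /= Hp' Hl eqxx.
apply: leq_ltn_trans (hdist_le Hr) _.
have : (size (x :: p') <= #|{: hgraph n k M}|)%N.
  by rewrite -(card_uniqP Hu) max_card.
by [].
Qed.

Lemma hdist_walk (n k M : nat) (x y : hgraph n k M) :
  exists p, [/\ path (@Hadj n k M) x p, last x p = y & size p = hdist x y].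
Proof.
have /existsP [p /andP [Hp /eqP Hl]] := hdist_reach (hdist_lt x y).
by exists p; rewrite size_tuple.
Qed.

Definition tsw n (a b : {set 'I_n}) (E : {set {set 'I_n}}) : {set {set 'I_n}} :=
  [set h | tperm a b h \in E].

Lemma tsw_hyp n k M (a b : {set 'I_n}) E :
  #|a| = k -> #|b| = k -> is_hyp k M E -> is_hyp k M (tsw a b E).
Proof.
move=> Ha Hb /andP [/forall_inP HE /eqP HM]; apply/andP; split.
  apply/forall_inP => h; rewrite inE => /HE.
  by case: tpermP => [->|->|_ _ ->]; rewrite ?Ha ?Hb.
rewrite /tsw -HM; apply/eqP; exact: (card_preimset _ (@perm_inj _ (tperm a b))).
Qed.

Definition tauH n k M (a b : {set 'I_n}) (Ha : #|a| = k) (Hb : #|b| = k)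
  (u : hgraph n k M) : hgraph n k M :=
  exist _ (tsw a b (val u)) (tsw_hyp Ha Hb (valP u)).

Lemma tsw_mem n (a b : {set 'I_n}) E h : (h \in tsw a b E) = (tperm a b h \in E).
Proof. by rewrite inE. Qed.

Lemma tauK n k M (a b : {set 'I_n}) (Ha : #|a| = k) (Hb : #|b| = k) :
  involutive (@tauH n k M a b Ha Hb).
Proof. by move=> u; apply: val_inj; apply/setP => h; rewrite /= ?tsw_mem tpermK. Qed.

Lemma tperm_neq (T : finType) (a b : T) h g :
  (h != tperm a b g) = (tperm a b h != g).
Proof. by rewrite -(inj_eq (@perm_inj _ (tperm a b))) tpermK. Qed.

Lemma tau_adj n k M (a b : {set 'I_n}) (Ha : #|a| = k) (Hb : #|b| = k)
  (u v : hgraph n k M) : Hadj u v -> Hadj (tauH Ha Hb u) (tauH Ha Hb v).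
Proof.
move=> /existsP [h1 /existsP [h2 /and4P [H12 H1 H2 /eqP HE]]].
apply/existsP; exists (tperm a b h1); apply/existsP; exists (tperm a b h2).
move: H1 H2; rewrite !inE /= !tpermK => -> ->.
rewrite (inj_eq (@perm_inj _ (tperm a b))) H12 /=.
apply/eqP/setP => h; rewrite !inE.
rewrite !tperm_neq.
by have := HE; move/setP/(_ (tperm a b h)); rewrite !inE.
Qed.

Lemma tau_xy n k M (a b : {set 'I_n}) (Ha : #|a| = k) (Hb : #|b| = k)
  (x y : hgraph n k M) :
  a != b -> a \in val x :\: val y -> b \in val y :\: val x -> val x :\ a = val y :\ b ->
  tauH Ha Hb x = y.
Proof.
move=> Hab; rewrite !inE => /andP [ay ax] /andP [bx By] HE.
apply: val_inj; apply/setP => h; rewrite /= ?tsw_mem.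
case: tpermP => [->|->|Hha Hhb].
- by rewrite (negbTE bx) (negbTE ay).
- by rewrite ax By.
- by move/setP: HE => /(_ h); rewrite !inE (introN eqP Hha) (introN eqP Hhb).
Qed.

Lemma tau_fix_or_adj_aux n k M (a b : {set 'I_n}) (Ha : #|a| = k) (Hb : #|b| = k)
  (u : hgraph n k M) : a != b -> a \in val u -> b \notin val u ->
  Hadj u (tauH Ha Hb u).
Proof.
move=> Hab au bu.
apply/existsP; exists a; apply/existsP; exists b.
rewrite Hab /= !inE /= ?tsw_mem tpermL tpermR au (negbTE bu) /=.
apply/eqP/setP => h; rewrite !inE ?tsw_mem.
case: tpermP => [->|->|Hha Hhb].
- by rewrite eqxx (negbTE bu) andbF.
- by rewrite eqxx (negbTE bu) andbF.
- by rewrite (introN eqP Hha) (introN eqP Hhb).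
Qed.

Lemma tsw_C n (a b : {set 'I_n}) E : tsw a b E = tsw b a E.
Proof. by rewrite /tsw tpermC. Qed.

Lemma tau_fix_or_adj n k M (a b : {set 'I_n}) (Ha : #|a| = k) (Hb : #|b| = k)
  (u : hgraph n k M) : a != b ->
  tauH Ha Hb u = u \/ Hadj u (tauH Ha Hb u).
Proof.
move=> Hab.
case Hau: (a \in val u); case Hbu: (b \in val u).
- left; apply: val_inj; apply/setP => h; rewrite /= ?tsw_mem.
  by case: tpermP => [->|->|_ _]; rewrite ?Hau ?Hbu.
- by right; apply: tau_fix_or_adj_aux => //; rewrite Hbu.
- right.
  have -> : tauH Ha Hb u = tauH Hb Ha u by apply: val_inj; rewrite /= tsw_C.
  by apply: tau_fix_or_adj_aux; rewrite // ?Hau // eq_sym.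
- left; apply: val_inj; apply/setP => h; rewrite /= ?tsw_mem.
  case: tpermP => [->|->|_ _]; by rewrite ?Hau ?Hbu.
Qed.

Lemma Hadj_sym n k M (u v : hgraph n k M) : Hadj u v -> Hadj v u.
Proof.
move=> /existsP [h1 /existsP [h2 /and4P [H12 H1 H2 /eqP HE]]].
apply/existsP; exists h2; apply/existsP; exists h1.
by rewrite eq_sym H12 H1 H2 HE eqxx.
Qed.

Lemma adj_split n k M (x u : hgraph n k M) : Hadj x u ->
  exists h1 h2, [/\ h1 != h2, h1 \in val x, h1 \notin val u, h2 \in val u &
     h2 \notin val x] /\ [/\ val x :\ h1 = val u :\ h2,
     val x :\: val u = [set h1] & val u :\: val x = [set h2]].
Proof.
move=> /existsP [h1 /existsP [h2 /and4P [H12]]].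
rewrite !inE => /andP [h1u h1x] /andP [h2x h2u] /eqP HE.
exists h1, h2; split => //; split => //; apply/setP => h; rewrite !inE.
- case: (eqVneq h h1) => [->|Hh]; first by rewrite h1u h1x.
  move/setP: HE => /(_ h); rewrite !inE Hh /=.
  by case: (h \in sval x); case: (h \in sval u); case: (h != h2).
- case: (eqVneq h h2) => [->|Hh]; first by rewrite h2u h2x.
  move/setP: HE => /(_ h); rewrite !inE Hh /=.
  by case: (h \in sval x); case: (h \in sval u); case: (h != h1).
Qed.

Lemma tau_fix n k M (a b : {set 'I_n}) (Ha : #|a| = k) (Hb : #|b| = k)
  (u : hgraph n k M) : (a \in val u) = (b \in val u) -> tauH Ha Hb u = u.
Proof.
move=> E; apply: val_inj; apply/setP => h; rewrite /= ?tsw_mem ?inE.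
by case: tpermP => [->|->|_ _]; rewrite ?E.
Qed.

Definition phi n k M (x y : hgraph n k M) (a b : {set 'I_n}) (Ha : #|a| = k) (Hb : #|b| = k)
  (u : hgraph n k M) : hgraph n k M :=
  if (u == x) || (u == y) then u else tauH Ha Hb u.

Lemma phiK n k M (x y : hgraph n k M) (a b : {set 'I_n}) (Ha : #|a| = k) (Hb : #|b| = k) :
  tauH Ha Hb x = y -> involutive (phi x y Ha Hb).
Proof.
move=> Hxy u; rewrite /phi.
have Hy : tauH Ha Hb y = x by rewrite -Hxy tauK.
case: (eqVneq u x) => [->|ux]; first by rewrite !eqxx.
case: (eqVneq u y) => [->|uy]; first by rewrite !eqxx orbT.
rewrite /=.
have E1 : (tauH Ha Hb u == x) = false.
  by rewrite -Hy (inj_eq (can_inj (tauK Ha Hb))) (negbTE uy).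
have E2 : (tauH Ha Hb u == y) = false.
  by rewrite -Hxy (inj_eq (can_inj (tauK Ha Hb))) (negbTE ux).
by rewrite E1 E2 /= tauK.
Qed.

Lemma phi_walk n k M (x y : hgraph n k M) (a b : {set 'I_n}) (Ha : #|a| = k) (Hb : #|b| = k) :
  tauH Ha Hb x = y -> Hadj x y -> forall u,
  ((u == x) || Hadj x u) = ((phi x y Ha Hb u == y) || Hadj y (phi x y Ha Hb u)).
Proof.
move=> Hxy Hadjxy u; rewrite /phi.
have Hy : tauH Ha Hb y = x by rewrite -Hxy tauK.
case: (eqVneq u x) => [->|ux] /=.
  by rewrite (Hadj_sym Hadjxy) orbT.
case: (eqVneq u y) => [->|uy] /=; first by rewrite eqxx Hadjxy.
rewrite -{1}Hxy (inj_eq (can_inj (tauK Ha Hb))) (negbTE ux) /=.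
apply/idP/idP => H.
  by rewrite -Hxy; apply: tau_adj.
by rewrite -Hy -[u](tauK Ha Hb); apply: tau_adj.
Qed.

Lemma phi_dist n k M (x y : hgraph n k M) (a b : {set 'I_n}) (Ha : #|a| = k) (Hb : #|b| = k) :
  a != b -> forall u, (hdist u (phi x y Ha Hb u) <= (phi x y Ha Hb u != u))%N.
Proof.
move=> Hab u; rewrite /phi; case: ifP => _; first by rewrite hdist0.
case: (tau_fix_or_adj Ha Hb u Hab) => [->|H]; first by rewrite hdist0.
have -> : (tauH Ha Hb u != u) = true.
  apply/eqP => E; move: H; rewrite E.
  move=> /existsP [h1 /existsP [h2 /and4P [_]]].
  by rewrite !inE => /andP [/negbTE ->].
exact: hdist_le (reach1 H).
Qed.

Lemma moved_card n k M (x y : hgraph n k M) (a b : {set 'I_n}) (Ha : #|a| = k) (Hb : #|b| = k) :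
  a != b -> a \in val x :\: val y -> b \in val y :\: val x -> val x :\ a = val y :\ b ->
  (#|[set u | ((u == x) || Hadj x u) && (phi x y Ha Hb u != u)]|
     <= (M - 1) * ('C(n, k) - M.+1))%N.
Proof.
move=> Hab Hax Hby HE.
have Hxy := tau_xy Ha Hb Hab Hax Hby HE.
move: (Hax) (Hby); rewrite !inE => /andP [ay ax] /andP [bx By].
set Mv := [set u | _].
pose S := val x :\ a.
pose K := [set h : {set 'I_n} | #|h| == k].
pose C := K :\: (b |: val x).
pose g := fun u : hgraph n k M => (val x :\: val u, val u :\: val x).
have ginj : injective g.
  move=> u v [E1 E2]; apply: val_inj; apply/setP => h.
  move/setP: E1 => /(_ h); move/setP: E2 => /(_ h); rewrite !inE.
  by case: (h \in val u); case: (h \in val v); case: (h \in val x).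
pose f := fun p : {set 'I_n} * {set 'I_n} => ([set p.1], [set p.2]).
have Hsub : g @: Mv \subset f @: setX S C.
  apply/subsetP => q /imsetP [u]; rewrite inE => /andP [Hu Hm] ->.
  have ux : u != x by apply: contraNneq Hm => ->; rewrite /phi eqxx.
  have uy : u != y by apply: contraNneq Hm => ->; rewrite /phi eqxx orbT.
  move: Hu; rewrite (negbTE ux) /= => Hu.
  have Htu : tauH Ha Hb u != u by move: Hm; rewrite /phi (negbTE ux) (negbTE uy).
  have Hab' : (a \in val u) != (b \in val u).
    by apply: contra Htu => /eqP /(tau_fix Ha Hb) ->.
  have [h1 [h2 [[H12 h1x h1u h2u h2x] [HE' D1 D2]]]] := adj_split Hu.
  have Huy : h1 = a -> h2 = b -> u = y.
    move=> E1 E2; apply: val_inj.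
    by rewrite -(setD1K h2u) -HE' E1 E2 HE setD1K.
  have Ea : h1 = a -> h2 = b.
    move=> E1; have : b \in val u :\: val x.
      rewrite inE bx /=; move: Hab'; rewrite -E1 (negbTE h1u).
      by case: (b \in val u).
    by rewrite D2 inE => /eqP.
  have Eb : h2 = b -> h1 = a.
    move=> E2; have : a \in val x :\: val u.
      by rewrite !inE ax andbT; move: Hab'; rewrite -E2 h2u; case: (a \in val u).
    by rewrite D1 inE => /eqP ->.
  apply/imsetP; exists (h1, h2); last by rewrite /g D1 D2.
  rewrite !inE /= h1x (negbTE h2x) (hyp_mem h2u) eqxx !andbT orbF.
  apply/andP; split.
    by apply/eqP => E1; move/eqP: uy; apply; apply: Huy => //; apply: Ea.
  by apply/eqP => E2; move/eqP: uy; apply; apply: Huy => //; apply: Eb.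
have H1 : #|Mv| = #|g @: Mv| by rewrite card_imset.
rewrite H1; apply: leq_trans (subset_leq_card Hsub) _.
apply: leq_trans (leq_imset_card _ _) _.
rewrite cardsX.
have -> : #|S| = (M - 1)%N.
  by have := hyp_card x; rewrite (cardsD1 a) ax add1n => <-; rewrite subn1.
have -> : #|C| = ('C(n, k) - M.+1)%N.
  rewrite cardsD /K card_draws card_ord.
  have -> : K :&: (b |: val x) = b |: val x.
    apply/setIidPr/subsetP => h; rewrite !inE => /orP [/eqP ->|Hh].
      by rewrite Hb.
    by rewrite (hyp_mem Hh).
  by rewrite cardsU1 bx hyp_card.
by [].
Qed.

Lemma Rsum_le (T : finType) (f g : T -> R) : (forall t, f t <= g t) -> Rsum f <= Rsum g.
Proof.
move=> H; rewrite /Rsum; apply: (big_ind2 (fun a b => a <= b)) => //.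
  by apply: Rle_refl.
by move=> *; apply: Rplus_le_compat.
Qed.

Lemma Rsum_ge0 (T : finType) (f : T -> R) : (forall t, 0 <= f t) -> 0 <= Rsum f.
Proof.
move=> H; rewrite /Rsum; apply: (big_ind (fun a => 0 <= a)) => //.
  by apply: Rle_refl.
by move=> *; apply: Rplus_le_le_0_compat.
Qed.

Lemma Rsum_add (T : finType) (f g : T -> R) : Rsum (fun t => f t + g t) = Rsum f + Rsum g.
Proof. by rewrite /Rsum big_split. Qed.

Lemma Rsum_reindex (T : finType) (f : T -> R) (F : T -> T) : injective F ->
  Rsum f = Rsum (fun t => f (F t)).
Proof. by move=> H; rewrite /Rsum (reindex_inj H). Qed.

Lemma Rsum_pt (T : finType) (j : T) (c : R) : Rsum (fun t => if t == j then c else 0) = c.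
Proof. by rewrite /Rsum -big_mkcond big_pred1_eq. Qed.

Lemma iter_plus m (c : R) : iter m (Rplus c) 0 = INR m * c.
Proof.
elim: m => [|m IH] /=; first by ring.
rewrite IH; destruct m; simpl; ring.
Qed.

Lemma Rsum_ind (T : finType) (A : {set T}) (c : R) :
  Rsum (fun t => if t \in A then c else 0) = INR #|A| * c.
Proof. by rewrite /Rsum -big_mkcond big_const iter_plus. Qed.

Lemma Rinf_le (S : R -> Prop) c0 : (forall c, S c -> 0 <= c) -> S c0 -> Rinf S <= c0.
Proof.
move=> Hpos Hc0.
pose E := fun x => S (- x).
have Hb : bound E.
  by exists 0 => x Ex; have := Hpos _ Ex; lra.
have He : exists x, E x by exists (- c0); rewrite /E Ropp_involutive.
case: (completeness E Hb He) => m [Hub Hl].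
have Hg : exists w, is_glb S w.
  exists (- m); split.
    move=> x Sx; have : E (- x) by rewrite /E Ropp_involutive.
    move/Hub; lra.
  move=> w' Hw'; suff : m <= - w' by lra.
  apply: Hl => x Ex; have := Hw' _ Ex; lra.
have := epsilon_spec (inhabits 0) (is_glb S) Hg.
rewrite /Rinf => -[Hlb _]; exact: Hlb.
Qed.

Lemma step n k M (x y : hgraph n k M) : (1 <= M)%N -> (M <= 'C(n,k) - 1)%N -> Hadj x y ->
 exists F : hgraph n k M -> hgraph n k M,
   [/\ injective F, forall u, hwalk x u = hwalk y (F u) &
   Rsum (fun u => hwalk x u * INR (hdist u (F u)))
     <= 1 - INR 'C(n,k) * / INR (M * ('C(n, k) - M) + 1)].
Proof.
move=> HM1 HM2 Hxy0.
have := Hxy0 => /existsP [a /existsP [b /and4P [Hab Hax Hby /eqP HE]]].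
have Ha : #|a| = k by apply: (@hyp_mem n k M x); move: Hax; rewrite inE => /andP [].
have Hb : #|b| = k by apply: (@hyp_mem n k M y); move: Hby; rewrite inE => /andP [].
have Hxy := tau_xy Ha Hb Hab Hax Hby HE.
exists (phi x y Ha Hb); split.
- exact: can_inj (phiK Hxy).
- by move=> u; rewrite /hwalk (phi_walk Hxy Hxy0 u).
set cst := / INR _.
have Hd : 0 < INR (M * ('C(n, k) - M) + 1) by apply: lt_0_INR; apply/ltP; rewrite addn1.
have Hc : 0 <= cst by apply: Rlt_le; apply: Rinv_0_lt_compat.
set Mv := [set u | ((u == x) || Hadj x u) && (phi x y Ha Hb u != u)].
apply: (Rle_trans _ (Rsum (fun u => if u \in Mv then cst else 0))).
  apply: Rsum_le => u; rewrite /hwalk inE.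
  case Hn: ((u == x) || Hadj x u) => /=; last by rewrite Rmult_0_l; lra.
  have := phi_dist x y Ha Hb Hab u.
  case: (phi x y Ha Hb u != u) => /= Hdd.
    have : INR (hdist u (phi x y Ha Hb u)) <= 1 by apply: (le_INR _ 1); apply/leP; exact: Hdd.
    move=> H1; have := Rmult_le_compat_l cst _ _ Hc H1; rewrite Rmult_1_r; exact.
  have -> : hdist u (phi x y Ha Hb u) = 0%N by apply/eqP; rewrite -leqn0.
  rewrite /= Rmult_0_r; lra.
rewrite Rsum_ind.
have Hmc := moved_card Ha Hb Hab Hax Hby HE.
have Hn : (#|Mv| + 'C(n, k) <= M * ('C(n, k) - M) + 1)%N.
  rewrite /Mv; set m := #|_|; move: Hmc; rewrite -/m.
  set N := 'C(n, k); move: HM1 HM2 => HM1 HM2 Hm.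
  have : ((M - 1) * (N - M.+1) + N <= M * (N - M) + 1)%N.
    have -> : M = (M - 1).+1 by lia.
    set p := (M - 1)%N.
    have -> : N = (p + (N - (p.+1).+1)).+2 by lia.
    set q := (N - _)%N. 
    have -> : ((p + q).+2 - p.+1 = q.+1)%N by lia.
    have -> : ((p + q).+2 - p.+2 = q)%N by lia.
    nia.
  lia.
have Hr : INR #|Mv| + INR 'C(n, k) <= INR (M * ('C(n, k) - M) + 1).
  by rewrite -plus_INR; apply: le_INR; apply/leP.
have Hcd : cst * INR (M * ('C(n, k) - M) + 1) = 1 by rewrite /cst Rinv_l //; lra.
have := Rmult_le_compat_l cst _ _ Hc Hr. nra.
Qed.

Lemma Rsum_ext (T : finType) (f g : T -> R) : (forall t, f t = g t) -> Rsum f = Rsum g.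
Proof. by move=> H; rewrite /Rsum; apply: eq_bigr => t _; apply: H. Qed.

Lemma Rsum_ptf (T : finType) (j : T) (c : T -> R) : Rsum (fun t => if t == j then c t else 0) = c j.
Proof. by rewrite /Rsum -big_mkcond big_pred1_eq. Qed.

Lemma Rsum0 (T : finType) : Rsum (fun _ : T => 0) = 0.
Proof. by rewrite /Rsum big1. Qed.

Lemma hwalk_ge0 n k M (x u : hgraph n k M) : 0 <= hwalk x u.
Proof.
rewrite /hwalk; case: ifP => _; last by apply: Rle_refl.
apply: Rlt_le; apply: Rinv_0_lt_compat; apply: lt_0_INR; apply/ltP; rewrite addn1 //.
Qed.

Lemma comp n k M : (1 <= M)%N -> (M <= 'C(n,k) - 1)%N -> forall p (x : hgraph n k M),
  path (@Hadj n k M) x p ->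
  exists F : hgraph n k M -> hgraph n k M,
   [/\ injective F, forall u, hwalk x u = hwalk (last x p) (F u) &
   Rsum (fun u => hwalk x u * INR (hdist u (F u)))
     <= INR (size p) * (1 - INR 'C(n,k) * / INR (M * ('C(n, k) - M) + 1))].
Proof.
move=> HM1 HM2; elim => [|y p IH] x /=.
  move=> _; exists id; split => //.
  apply: (Rle_trans _ (Rsum (fun _ => 0))).
    by apply: Rsum_le => u; rewrite hdist0 /= Rmult_0_r; apply: Rle_refl.
  by rewrite Rsum0 Rmult_0_l; apply: Rle_refl.
move=> /andP [Hxy Hp].
have [F' [F'inj F'w F'c]] := IH y Hp.
have [F1 [F1inj F1w F1c]] := step HM1 HM2 Hxy.
exists (fun u => F' (F1 u)); split.
- by move=> u v /F'inj /F1inj.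
- by move=> u; rewrite F1w F'w.
set B := (1 - INR 'C(n,k) * / INR (M * ('C(n, k) - M) + 1)) in F1c F'c *.
apply: (Rle_trans _ (Rsum (fun u => hwalk x u * INR (hdist u (F1 u)) +
     hwalk y (F1 u) * INR (hdist (F1 u) (F' (F1 u)))))).
  apply: Rsum_le => u; rewrite -F1w -Rmult_plus_distr_l -plus_INR.
  apply: Rmult_le_compat_l; first exact: hwalk_ge0.
  by apply: le_INR; apply/leP; apply: hdist_tri.
rewrite Rsum_add -(Rsum_reindex (fun w => hwalk y w * INR (hdist w (F' w))) F1inj).
have E := S_INR (size p); simpl in E; rewrite E.
rewrite Rmult_plus_distr_r Rmult_1_l; lra.
Qed.

Lemma transport_le n k M (x y : hgraph n k M) (F : hgraph n k M -> hgraph n k M) :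
  injective F -> (forall u, hwalk x u = hwalk y (F u)) ->
  transport (hwalk x) (hwalk y) <= Rsum (fun u => hwalk x u * INR (hdist u (F u))).
Proof.
move=> Finj Fw.
have [g Fg gF] := injF_bij Finj.
apply: Rinf_le.
  move=> c [A [[HA _] ->]]; apply: Rsum_ge0 => u; apply: Rsum_ge0 => v.
  by apply: Rmult_le_pos => //; apply: pos_INR.
exists (fun u v => if v == F u then hwalk x u else 0); split.
  split; [|split].
  - by move=> u v; case: ifP => _; [apply: hwalk_ge0 | apply: Rle_refl].
  - by move=> u; apply: Rsum_pt.
  - move=> v; rewrite (Rsum_ext (g := fun u => if u == g v then hwalk x u else 0)).
      by rewrite Rsum_ptf Fw gF.
    by move=> u; rewrite -{1}(gF v) (inj_eq Finj) eq_sym.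
apply: Rsum_ext => u.
rewrite (Rsum_ext (g := fun v => if v == F u then hwalk x u * INR (hdist u (F u)) else 0)).
  by rewrite Rsum_pt.
by move=> v; case: eqP => [->|_] //; rewrite Rmult_0_l.
Qed.

Theorem mainTheorem7 (k n M : nat) :
  (2 <= k)%N -> (k <= n)%N -> (1 <= M)%N -> (M <= 'C(n, k) - 1)%N ->
  forall H1 H2 : hgraph n k M, H1 <> H2 ->
  (INR 'C(n, k) / INR (M * ('C(n, k) - M) + 1)%N <= kappa H1 H2)%R.
Proof.
move=> Hk Hkn HM1 HM2 H1 H2 Hne.
have [p [Hp Hl Hs]] := hdist_walk H1 H2.
have [F [Finj Fw Fc]] := comp HM1 HM2 Hp.
rewrite Hl in Fw.
have HW := transport_le Finj Fw.
rewrite Hs in Fc.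
have HD : 0 < INR (hdist H1 H2) by apply: lt_0_INR; apply/ltP; apply: hdist_pos.
rewrite /kappa.
set W := transport _ _ in HW *.
set D := INR (hdist H1 H2) in HD Fc *.
set B := (1 - _) in Fc.
have HWD : W / D <= B.
  unfold Rdiv; apply: (Rmult_le_reg_r D) => //.
  rewrite Rmult_assoc Rinv_l; last by lra.
  lra.
rewrite /B in HWD. unfold Rdiv in HWD |- *. lra.
Qed.
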